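(* Let $G$ be a $1$-regular graph with $n$ vertices. Then the complement $\overline{G}$ is divergent if and only if $n\geq 6$.
   Context: All graphs are finite and simple. A complete in a graph is a set of pairwise adjacent vertices; a clique is a maximal complete. The clique graph $K(G)$ is the intersection graph of the cliques of $G$. Iterated clique graphs: $K^0(G)=G$, $K^n(G)=K(K^{n-1}(G))$ for $n\ge 1$. $G$ is convergent if the sequence $(K^n(G))_{n\ge0}$ contains only finitely many graphs up to isomorphism, and divergent otherwise. *)

(* Defs.v *)
From mathcomp Require Import all_boot.
Set Implicit Arguments. Unset Strict Implicit. Unset Printing Implicit Defensive.

(* Simplicity (symmetry, irreflexivity) is imposed as a hypothesis where needed;
   the clique-graph construction below always produces simple graphs. *)
Record sgraph := SGraph { V : finType; adj : rel V }.
Arguments adj : clear implicits.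

Definition simple_graph (G : sgraph) : Prop :=
  symmetric (adj G) /\ irreflexive (adj G).

Definition complete (G : sgraph) (A : {set V G}) : bool :=
  [forall x in A, forall y in A, (x != y) ==> adj G x y].

Definition clique (G : sgraph) (A : {set V G}) : bool :=
  complete A && [forall B : {set V G}, (complete B && (A \subset B)) ==> (B == A)].

Definition clique_type (G : sgraph) := {A : {set V G} | clique A}.

Definition Kadj (G : sgraph) : rel (clique_type G) :=
  fun A B => (A != B) && (val A :&: val B != set0).

Definition K (G : sgraph) : sgraph := @SGraph (clique_type G) (@Kadj G).

Definition Kiter (n : nat) (G : sgraph) : sgraph := iter n K G.

Definition isomorphic (G H : sgraph) : Prop :=
  exists f : V G -> V H, bijective f /\ forall x y, adj H (f x) (f y) = adj G x y.

(* Convergent: the sequence (K^n G) contains only finitely many graphs up to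
   isomorphism, i.e. there is a finite list of graphs to one of which every
   K^n G is isomorphic. *)
Definition convergent (G : sgraph) : Prop :=
  exists L : seq sgraph, forall n, exists2 i, i < size L & isomorphic (Kiter n G) (nth G L i).

Definition divergent (G : sgraph) : Prop := ~ convergent G.

Definition complement (G : sgraph) : sgraph :=
  @SGraph (V G) (fun x y => (x != y) && ~~ adj G x y).

Definition regular (k : nat) (G : sgraph) : Prop :=
  forall x : V G, #|[set y | adj G x y]| = k.

(* Main.v *)
Require Import Defs.
From mathcomp Require Import all_boot.
Set Implicit Arguments. Unset Strict Implicit. Unset Printing Implicit Defensive.

Definition CP (H : sgraph) (s : V H -> V H) : Prop :=
  involutive s /\ (forall x, s x != x) /\ forall x y, adj H x y = (x != y) && (y != s x).

Definition trb (T : finType) (s : T -> T) (A : {set T}) : bool :=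
  [forall x, (x \in A) == (s x \notin A)].

Lemma trbP (T : finType) (s : T -> T) (A : {set T}) :
  reflect (forall x, (x \in A) = (s x \notin A)) (trb s A).
Proof. by apply: (iffP forallP) => H x; apply/eqP/H. Qed.

Lemma completeCP H s (A : {set V H}) : CP s ->
  complete A = [forall x in A, s x \notin A].
Proof.
move=> [sK [sx sadj]]; apply/forall_inP/forall_inP => Hc x xA.
- apply/negP => sxA; have := forall_inP (Hc x xA) _ sxA.
  by rewrite sadj eq_sym sx eqxx.
- apply/forall_inP => y yA; apply/implyP => xy; rewrite sadj xy /=.
  by apply: contraNneq (Hc x xA) => <-.
Qed.

Lemma cliqueCP H s (A : {set V H}) : CP s -> clique A = trb s A.
Proof.
move=> hs; have [sK [sx sadj]] := hs.
rewrite /clique (completeCP _ hs); apply/idP/idP.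
- case/andP => /forall_inP Hc /forallP Hm; apply/trbP => x.
  case xA: (x \in A); first by rewrite (Hc x xA).
  apply/esym/negbTE; rewrite negbK; apply/negPn/negP => sxA.
  have := Hm (x |: A); rewrite subsetUr andbT (completeCP _ hs).
  have -> : [forall y in x |: A, s y \notin x |: A].
    apply/forall_inP => y /setU1P [->|yA]; rewrite !inE negb_or.
      by rewrite sx sxA.
    rewrite (Hc y yA) andbT; apply/negP => /eqP e.
    by move: sxA; rewrite -e sK yA.
  move=> /= /eqP e; by move: xA; rewrite -e setU11.
- move/trbP => Ht; apply/andP; split.
    by apply/forall_inP => x xA; rewrite -Ht.
  apply/forallP => B; apply/implyP => /andP [+ sAB]; rewrite (completeCP _ hs) => /forall_inP HB.
  rewrite eqEsubset sAB andbT; apply/subsetP => y yB.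
  apply/negPn/negP => yA; move: (Ht y); rewrite (negbTE yA) => /esym/negbFE sy.
  by move: (HB y yB); rewrite (subsetP sAB _ sy).
Qed.

Lemma trbC (T : finType) (s : T -> T) (A : {set T}) : trb s A -> trb s (~: A).
Proof. by move/trbP => Ht; apply/trbP => x; rewrite !inE Ht !negbK. Qed.

Lemma trb_disj (T : finType) (s : T -> T) (A B : {set T}) :
  trb s A -> trb s B -> (A :&: B == set0) = (B == ~: A).
Proof.
move=> /trbP hA /trbP hB; apply/eqP/eqP => [e|->]; last by rewrite setICr.
apply/setP => x; rewrite inE; case xA: (x \in A).
  by apply/negbTE/negP => xB; move: (in_set0 x); rewrite -e inE xA xB.
move: (hA x); rewrite xA => /esym /negbFE sxA.
rewrite hB; apply/negP => sxB.
by move: (in_set0 (s x)); rewrite -e inE sxA sxB.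
Qed.

Lemma clique_comp (H : sgraph) (s : V H -> V H) (hs : CP s) (A : clique_type H) : clique (~: val A).
Proof. by rewrite (cliqueCP _ hs) trbC // -(cliqueCP _ hs) (valP A). Qed.

Definition tauK (H : sgraph) (s : V H -> V H) (hs : CP s) (A : clique_type H) : clique_type H :=
  exist _ (~: val A) (clique_comp hs A).

Lemma CP_K (H : sgraph) (s : V H -> V H) (hs : CP s) : 0 < #|V H| -> @CP (K H) (tauK hs).
Proof.
move=> hpos; have [sK [sx sadj]] := hs; split; [|split].
- by move=> A; apply: val_inj; rewrite /= setCK.
- move=> A; apply/negP => /eqP /(f_equal val) /= e.
  case: (pickP (@predT (V H))) => [x _|h]; last by move: hpos; rewrite (eq_card0 h).
  by move/setP: e => /(_ x); rewrite inE; case: (x \in sval A).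
- move=> A B; rewrite /= /Kadj; congr (_ && _).
  rewrite (trb_disj (s := s)) -?(cliqueCP _ hs) ?(valP A) ?(valP B) //.
Qed.

Lemma cardK (H : sgraph) (s : V H -> V H) (hs : CP s) :
  exists m, #|V H| = m.*2 /\ #|V (K H)| = 2 ^ m.
Proof.
have [sK [sx sadj]] := hs.
pose A0 := [set x | enum_rank x < enum_rank (s x)].
have tA0 : trb s A0.
  apply/trbP => x; rewrite !inE sK -leqNgt [X in _ = X]leq_eqVlt.
  suff -> : (enum_rank x == enum_rank (s x) :> nat) = false by [].
  by rewrite val_eqE (inj_eq enum_rank_inj) eq_sym (negbTE (sx x)).
have /trbP hA := tA0; clearbody A0.
exists #|A0|; split.
  rewrite -(cardsC A0) -addnn; congr (_ + _).
  have -> : ~: A0 = s @: A0.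
    apply/setP => x; rewrite inE; apply/idP/imsetP => [xA|[y yA ->]].
      by exists (s x); rewrite ?sK // -[s x \in A0]negbK -hA.
    by rewrite -hA.
  by rewrite card_imset //; apply: inv_inj.
rewrite /= card_sig.
have -> : #|[pred A : {set V H} | clique A]| = #|[set A | trb s A]|.
  by apply: eq_card => A; rewrite !inE (cliqueCP _ hs).
rewrite -card_powerset -(card_in_imset (f := fun A => A :&: A0)).
  congr (#|pred_of_set _|); apply/setP => S; rewrite inE.
  apply/imsetP/idP => [[A _ ->]|SA]; first exact: subsetIr.
  pose B := S :|: [set x | s x \in A0 :\: S].
  have hS : forall x, x \in S -> x \in A0 by move=> x; apply: (subsetP SA).
  exists B.
    rewrite inE; apply/trbP => x; rewrite !inE sK.
    case xA: (x \in A0); move: (hA x); rewrite xA => /esym.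
      move=> /negbTE sxA.
      have sxS : (s x \in S) = false.
        by apply/negbTE; apply: contraFN sxA => /hS.
      by rewrite sxA sxS /=; case: (x \in S).
    move=> /negbFE sxA.
    have xS : (x \in S) = false by apply/negbTE; apply: contraFN xA => /hS.
    by rewrite sxA xS /=; case: (s x \in S).
  apply/setP => x; rewrite !inE.
  case xA: (x \in A0).
    have sxA : (s x \in A0) = false by apply/negbTE; rewrite -hA.
    by rewrite sxA andbF orbF andbT.
  by rewrite andbF; apply/negbTE; apply: contraFN xA => /hS.
move=> A B; rewrite !inE => /trbP tA /trbP tB e; apply/setP => x.
case xA: (x \in A0).
  by move/setP: e => /(_ x); rewrite !inE xA !andbT.
move: (hA x); rewrite xA => /esym /negbFE sxA.
move/setP: e => /(_ (s x)); rewrite !inE sxA !andbT tA tB.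
by rewrite sK => /(congr1 negb); rewrite !negbK.
Qed.

Lemma compl_CP (G : sgraph) : simple_graph G -> regular 1 G ->
  exists s : V G -> V G, @CP (complement G) s.
Proof.
move=> [sym irr] reg.
pose s x := odflt x [pick y | adj G x y].
have hN : forall x y, adj G x y = (y == s x).
  move=> x y; have [y0 e] := cards1P (introT eqP (reg x)).
  have h : forall z, adj G x z = (z == y0).
    by move=> z; move/setP: e => /(_ z); rewrite !inE.
  rewrite /s; case: pickP => [z hz|hz] /=; first by rewrite h -(eqP (etrans (esym (h z)) hz)).
  by move: (hz y0); rewrite h eqxx.
exists s; split; [|split].
- move=> x; apply/esym/eqP; rewrite -hN sym hN.
  done.
- by move=> x; apply/negP => /eqP e; move: (irr x); rewrite hN e eqxx.
- by move=> x y /=; rewrite hN.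
Qed.

Lemma K_le1 (H : sgraph) : #|V H| <= 1 -> #|V (K H)| <= 1.
Proof.
move=> /card_le1_eqP h1.
have cT : forall A : {set V H}, clique A -> A = setT.
  move=> A /andP [_ /forallP /(_ setT)].
  have -> : complete (setT : {set V H}).
    apply/forall_inP => x _; apply/forall_inP => y _.
    by rewrite (h1 x y) ?inE // eqxx.
  by rewrite subsetT /= => /eqP.
apply/card_le1_eqP => A B _ _; apply: val_inj.
by rewrite (cT _ (valP A)) (cT _ (valP B)).
Qed.

Lemma conv_bound (G : sgraph) : convergent G ->
  exists N, forall n, #|V (Kiter n G)| <= N.
Proof.
move=> [L hL]; exists (\max_(i < size L) #|V (nth G L i)|) => n.
have [i hi [f [fb _]]] := hL n.
rewrite (bij_eq_card fb).
exact: (leq_bigmax (F := fun i : 'I_(size L) => #|V (nth G L i)|) (Ordinal hi)).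
Qed.

Definition mkG (c : nat) (F : {ffun 'I_c * 'I_c -> bool}) : sgraph :=
  @SGraph 'I_c (fun i j => F (i, j)).
Definition block (c : nat) : seq sgraph :=
  map (@mkG c) (enum {ffun 'I_c * 'I_c -> bool}).
Definition bigL (N : nat) : seq sgraph := flatten (map block (iota 0 N.+1)).

Lemma nth_flatten_ex (T : Type) (d : T) (ss : seq (seq T)) j i :
  j < size ss -> i < size (nth [::] ss j) ->
  exists2 k, k < size (flatten ss) & nth d (flatten ss) k = nth d (nth [::] ss j) i.
Proof.
elim: ss j => [|s ss IH] [|j] //= hj hi.
  by exists i; rewrite ?size_cat ?nth_cat ?hi // (leq_trans hi) ?leq_addr.
have [k hk e] := IH j hj hi; exists (size s + k).
  by rewrite size_cat ltn_add2l.
by rewrite nth_cat ltnNge leq_addr /= addKn.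
Qed.

Lemma bound_conv (G : sgraph) :
  (exists N, forall n, #|V (Kiter n G)| <= N) -> convergent G.
Proof.
move=> [N hN]; exists (bigL N) => n.
set H := Kiter n G.
pose F := [ffun p : 'I_#|V H| * 'I_#|V H| => adj H (enum_val p.1) (enum_val p.2)].
have hc : #|V H| < size (map block (iota 0 N.+1)).
  by rewrite size_map size_iota ltnS hN.
have hb : nth [::] (map block (iota 0 N.+1)) #|V H| = block #|V H|.
  by rewrite (nth_map 0) ?size_iota ?ltnS ?hN // nth_iota ?ltnS ?hN.
have hiF : index F (enum {ffun 'I_#|V H| * 'I_#|V H| -> bool}) <
           size (nth [::] (map block (iota 0 N.+1)) #|V H|).
  by rewrite hb size_map index_mem mem_enum.
have [k hk e] := nth_flatten_ex G hc hiF.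
exists k => //; rewrite /bigL e hb (nth_map F) ?index_mem ?mem_enum // nth_index ?mem_enum //.
exists enum_rank; split; first exact: enum_rank_bij.
by move=> x y; rewrite /= ffunE /= !enum_rankK.
Qed.

From mathcomp Require Import zify.

Lemma pow_gt m : 3 <= m -> m.*2 < 2 ^ m.
Proof.
elim: m => // m IH; rewrite ltnS leq_eqVlt => /orP [/eqP <- // | h].
have := IH h; rewrite expnS; lia.
Qed.

Lemma KiterS n G : Kiter n.+1 G = K (Kiter n G).
Proof. by []. Qed.

Theorem mainTheorem1 (G : sgraph) :
  simple_graph G -> regular 1 G ->
  (divergent (complement G) <-> 6 <= #|V G|).
Proof.
move=> hs hr; have [s hCP] := compl_CP hs hr.
have [m [hm _]] := cardK hCP.
have hVc : #|V (complement G)| = #|V G| by [].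
split.
- move=> hdiv; rewrite leqNgt; apply/negP => hlt; apply: hdiv; apply: bound_conv.
  case: m hm => [|m] hm.
    exists 1; elim=> [|n IH]; first by rewrite /= hVc hm.
    by rewrite KiterS; apply: K_le1.
  have hinv : forall n, exists s' : V (Kiter n (complement G)) -> V _,
      @CP _ s' /\ #|V (Kiter n (complement G))| = #|V G|.
    elim=> [|n [s' [hs' hc]]]; first by exists s.
    have hpos : 0 < #|V (Kiter n (complement G))| by rewrite hc hm.
    exists (tauK hs'); split; first exact: CP_K.
    have [m' [hm' hk]] := cardK hs'.
    rewrite KiterS hk; move: hm'; rewrite hc hm => /double_inj <-.
    by move: hlt; rewrite hm; case: m {hm hpos} => [|[|[]]].
  by exists #|V G| => n; have [s' [_ ->]] := hinv n.
- move=> h6 hconv; have [N hN] := conv_bound hconv.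
  have hinv : forall n, exists s' : V (Kiter n (complement G)) -> V _,
      @CP _ s' /\ 6 + n <= #|V (Kiter n (complement G))|.
    elim=> [|n [s' [hs' hc]]]; first by exists s; rewrite addn0.
    have hpos : 0 < #|V (Kiter n (complement G))| by apply: leq_trans hc.
    exists (tauK hs'); split; first exact: CP_K.
    have [m' [hm' hk]] := cardK hs'.
    rewrite KiterS hk addnS; apply: leq_ltn_trans (pow_gt _); rewrite -?hm' //.
    by move: hc; rewrite hm'; lia.
  have [s' [_ hc]] := hinv N.+1; have := hN N.+1; lia.
Qed.
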